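(* Let $m\in\mathbb N$, $m\ge1$, and let $x_0,x_1\in\mathbb C_p$ with $|x_0|=|x_1|=\rho_m$ and $|x_0-x_1|\le S$. If $\lambda_0,\lambda_1\in\Lambda$ satisfy $$\rho_{m-1}\cdots\rho_1\,|x_0-x_1|<|\lambda_0-\lambda_1|\le S,$$ then $|Q^m_{\lambda_0}(x_0)-Q^m_{\lambda_1}(x_1)|=|\lambda_0-\lambda_1|$.
   Context: Let $p$ be a prime, $\mathbb C_p$ with $p$-adic absolute value, $|p|=1/p$. $\Lambda=\{\lambda\in\mathbb C_p:|\lambda-1|<1\}$, $P_\lambda(z)=\frac{\lambda}{p}z^p+\left(1-\frac{\lambda}{p}\right)z^{p+1}$, $\rho=p^{-1/(p-1)}$; $S>0$ is defined by $pS^{p-1}=\rho$; $\rho_0=1$ and $p\rho_n^p=\rho_{n-1}$ for $n\ge1$ (empty products equal $1$). Fix $\hat r\in|\mathbb C_p^*|$, $\hat r>1$, $B=\{z:|z|\le\hat r\}$; $\mathcal H(B)$ is the ring of power series $\sum a_iz^i$ convergent on $B$ with norm $\|f\|_B=\sup_i|a_i|\hat r^{\,i}$. Fix $Q\in\mathcal H(B)$ with $\|Q\|_B<\rho$, $Q^*_\lambda=P_\lambda+Q$, and let $h(\lambda)$ be the unique fixed point of $Q^*_\lambda$ in $\{z:|z-1|\le|Q(1)|/p\}$. Define $Q_\lambda(z)=P_\lambda(z+h(\lambda)-1)+Q(z+h(\lambda)-1)+1-h(\lambda)$ for $z\in B$. *)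

(* Defs.v *)
From HB Require Import structures.
From mathcomp Require Import all_boot all_order all_algebra.
From mathcomp Require Import classical_sets reals exp.
Set Implicit Arguments. Unset Strict Implicit. Unset Printing Implicit Defensive.
Import Order.TTheory GRing.Theory Num.Theory.
Local Open Scope ring_scope.

Section Defs.
Variable R : realType.

(* K (with absolute value av : K -> R) is "C_p": an algebraically closed
   field (closedFieldType) with a non-archimedean absolute value, |p| = 1/p,
   complete, and in which the algebraic numbers (roots of nonzero rational
   polynomials) are dense.  These properties characterize C_p up to
   isometric isomorphism. *)
Definition abs_cauchy (K : closedFieldType) (av : K -> R) (u : nat -> K) :=
  forall eps : R, 0 < eps -> exists N : nat,
    forall m n : nat, (N <= m)%N -> (N <= n)%N -> av (u m - u n) < eps.

Definition abs_cvg_to (K : closedFieldType) (av : K -> R) (u : nat -> K) (l : K) :=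
  forall eps : R, 0 < eps -> exists N : nat,
    forall n : nat, (N <= n)%N -> av (u n - l) < eps.

Definition is_Cp (p : nat) (K : closedFieldType) (av : K -> R) : Prop :=
  (forall x : K, 0 <= av x) /\
  (forall x : K, av x = 0 <-> x = 0) /\
  (forall x y : K, av (x * y) = av x * av y) /\
  (forall x y : K, av (x + y) <= Num.max (av x) (av y)) /\
  av (p%:R) = (p%:R)^-1 /\
  (forall u : nat -> K, abs_cauchy av u -> exists l, abs_cvg_to av u l) /\
  (forall (x : K) (eps : R), 0 < eps ->
      exists y : K, av (x - y) < eps /\
        exists P : {poly rat}, P != 0 /\ root (map_poly ratr P) y).

Definition rho (p : nat) : R := powR (p%:R) (- ((p.-1)%:R)^-1).
(* S > 0 with p S^{p-1} = rho, i.e. S = (rho/p)^{1/(p-1)} *)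
Definition Sconst (p : nat) : R := powR (rho p / p%:R) (((p.-1)%:R)^-1).
(* rho_0 = 1, p rho_n^p = rho_{n-1}, i.e. rho_n = (rho_{n-1}/p)^{1/p} *)
Fixpoint rho_seq (p : nat) (n : nat) : R :=
  match n with
  | 0 => 1
  | n'.+1 => powR (rho_seq p n' / p%:R) ((p%:R)^-1)
  end.

Variable K : closedFieldType.
Variable av : K -> R.

(* a power series sum a_i z^i converges on B = {|z| <= rhat} *)
Definition conv_on_B (rhat : R) (a : nat -> K) : Prop :=
  forall eps : R, 0 < eps -> exists N : nat,
    forall i : nat, (N <= i)%N -> av (a i) * rhat ^+ i < eps.

(* ||f||_B < c, with ||f||_B = sup_i |a_i| rhat^i *)
Definition normB_lt (rhat : R) (a : nat -> K) (c : R) : Prop :=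
  exists c' : R, c' < c /\ forall i : nat, av (a i) * rhat ^+ i <= c'.

Definition partial_sum (a : nat -> K) (z : K) (n : nat) : K :=
  \sum_(i < n) a i * z ^+ i.

Definition pser_eval (a : nat -> K) (z : K) : K :=
  xget 0 [set s | abs_cvg_to av (partial_sum a z) s].

Definition Plam (p : nat) (lam z : K) : K :=
  lam / p%:R * z ^+ p + (1 - lam / p%:R) * z ^+ p.+1.

Definition Qlam (p : nat) (a : nat -> K) (h : K -> K) (lam z : K) : K :=
  Plam p lam (z + h lam - 1) + pser_eval a (z + h lam - 1) + 1 - h lam.

End Defs.

(* Main.v *)
Require Import Defs.
From HB Require Import structures.
From mathcomp Require Import all_boot all_order all_algebra.
From mathcomp Require Import classical_sets reals exp.
From mathcomp Require Import ring lra zify.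
Import Order.TTheory GRing.Theory Num.Theory.
Local Open Scope ring_scope.

Lemma powR_invK (R : realType) (x : R) (n : nat) : 0 <= x -> (0 < n)%N ->
  (x `^ (n%:R^-1)) ^+ n = x.
Proof.
move=> x0 n0; rewrite -powR_mulrn ?powR_ge0 // -powRrM mulVf ?powRr1 //.
by rewrite pnatr_eq0 -lt0n.
Qed.

Lemma rho_gt0 (R : realType) p : (1 < p)%N -> 0 < rho R p.
Proof. move=> p1; rewrite /rho powR_gt0 // ltr0n; lia. Qed.

Lemma rho_pow (R : realType) p : (1 < p)%N -> (rho R p) ^+ p.-1 = (p%:R)^-1.
Proof.
move=> p1; rewrite /rho -powR_mulrn ?powR_ge0 // -powRrM.
rewrite mulNr mulVf ?pnatr_eq0; last lia.
have := @powR_invn R p%:R 1 (ler0n _ _); rewrite expr1 => <-.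
by [].
Qed.

Lemma S_gt0 (R : realType) p : (1 < p)%N -> 0 < Sconst R p.
Proof.
move=> p1; rewrite /Sconst powR_gt0 // divr_gt0 ?rho_gt0 // ltr0n; lia.
Qed.

Lemma S_pow (R : realType) p : (1 < p)%N -> (Sconst R p) ^+ p.-1 = rho R p / p%:R.
Proof.
move=> p1; rewrite /Sconst powR_invK //; last lia.
by rewrite divr_ge0 ?ler0n // ltW // rho_gt0.
Qed.

Lemma rhos_gt0 (R : realType) p k : (1 < p)%N -> 0 < rho_seq R p k.
Proof.
move=> p1; elim: k => [|k IH] /=; first exact: ltr01.
rewrite powR_gt0 // divr_gt0 // ltr0n; lia.
Qed.

Lemma rhos_pow (R : realType) p k : (1 < p)%N ->
  (rho_seq R p k.+1) ^+ p = rho_seq R p k / p%:R.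
Proof.
move=> p1 /=; rewrite powR_invK //; last lia.
by rewrite divr_ge0 ?ler0n // ltW // rhos_gt0.
Qed.

Lemma pow_le_inv (R : realType) (n : nat) (x y : R) : (0 < n)%N -> 0 <= y ->
  x ^+ n <= y ^+ n -> x <= y.
Proof.
move=> n0 y0 h; case: (leP x y) => // yx.
by move: (ltrXn2r n y0 yx); rewrite -lt0n n0 ltNge h.
Qed.

Lemma pow_lt_inv (R : realType) (n : nat) (x y : R) : 0 <= y ->
  x ^+ n < y ^+ n -> x < y.
Proof.
move=> y0 h; case: (ltP x y) => // yx.
move: yx; rewrite le_eqVlt => /orP [/eqP yx|xy]; first by rewrite yx ltxx in h.
by have := ltrXn2r n y0 xy; case: (n =P 0)%N h => [->|_]; rewrite ?ltxx // => h1 h2;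
  move: (lt_trans h1 h2); rewrite ltxx.
Qed.

Lemma p_pos (R : realType) p : (1 < p)%N -> 0 < (p%:R : R).
Proof. move=> p1; rewrite ltr0n; lia. Qed.

Lemma rho_lt1 (R : realType) p : (1 < p)%N -> rho R p < 1.
Proof.
move=> p1; apply: (@pow_lt_inv R p.-1) => //; rewrite expr1n rho_pow //.
by rewrite invf_lt1 ?p_pos // ltr1n.
Qed.

Lemma invp_le_rho (R : realType) p : (1 < p)%N -> (p%:R : R)^-1 <= rho R p.
Proof.
move=> p1; apply: (@pow_le_inv R p.-1); first lia.
  exact/ltW/rho_gt0.
rewrite rho_pow //.
have h0 : 0 <= (p%:R : R)^-1 by rewrite invr_ge0 ler0n.
have h1 : (p%:R : R)^-1 <= 1 by rewrite invf_le1 ?p_pos // ler1n; lia.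
have [n ->] : exists n, p.-1 = n.+1 by exists p.-2; lia.
rewrite exprS; have := exprn_ile1 n h0 h1; have := exprn_ge0 n h0.
set a := (p%:R : R)^-1; set b := a ^+ n => hb1 hb2; rewrite -{2}(mulr1 a); exact: ler_wpM2l.
Qed.

Lemma rho_lt_rhos (R : realType) p k : (1 < p)%N -> rho R p < rho_seq R p k.
Proof.
move=> p1; elim: k => [|k IH]; first exact: rho_lt1.
apply: (@pow_lt_inv R p); first exact/ltW/rhos_gt0.
rewrite rhos_pow //.
have -> : rho R p ^+ p = rho R p / p%:R.
  by rewrite -(prednK (ltnW p1)) exprS prednK ?rho_pow //; lia.
by rewrite ltr_pM2r ?invr_gt0 ?p_pos.
Qed.

Lemma rhos_succ_lt1 (R : realType) p k : (1 < p)%N -> rho_seq R p k <= 1 ->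
  rho_seq R p k.+1 < 1.
Proof.
move=> p1 hk; apply: (@pow_lt_inv R p) => //; rewrite expr1n rhos_pow //.
have hp := @p_pos R p p1.
have : (p%:R : R)^-1 < 1 by rewrite invf_lt1 // ltr1n.
have := rhos_gt0 R p k p1; rewrite mulrC => h0 h1.
apply: (le_lt_trans _ h1); rewrite -{2}(mulr1 (p%:R^-1)); apply: ler_wpM2l => //.
by rewrite invr_ge0 ltW.
Qed.

Lemma rhos_le1 (R : realType) p k : (1 < p)%N -> rho_seq R p k <= 1.
Proof.
move=> p1; case: k => [|k] //; elim: k => [|k IH]; first by apply/ltW/rhos_succ_lt1.
exact/ltW/rhos_succ_lt1.
Qed.

Lemma rhos_lt1 (R : realType) p k : (1 < p)%N -> rho_seq R p k.+1 < 1.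
Proof. move=> p1; exact/rhos_succ_lt1/rhos_le1. Qed.

Lemma S_le_rho (R : realType) p : (1 < p)%N -> Sconst R p <= rho R p.
Proof.
move=> p1; apply: (@pow_le_inv R p.-1); first lia.
  exact/ltW/rho_gt0.
rewrite S_pow // rho_pow // -[X in _ <= X]mul1r ler_pM2r ?invr_gt0 ?p_pos //; exact/ltW/rho_lt1.
Qed.

Set Implicit Arguments. Unset Strict Implicit.


Lemma av_ge0 (R : realType) p (K : closedFieldType) (av : K -> R) :
  is_Cp p av -> forall x, 0 <= av x.
Proof. by case. Qed.

Lemma av_eq0 (R : realType) p (K : closedFieldType) (av : K -> R) :
  is_Cp p av -> forall x, av x = 0 <-> x = 0.
Proof. by case=> _ []. Qed.

Lemma avM (R : realType) p (K : closedFieldType) (av : K -> R) :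
  is_Cp p av -> forall x y, av (x * y) = av x * av y.
Proof. by case=> _ [] _ []. Qed.

Lemma av_ultra (R : realType) p (K : closedFieldType) (av : K -> R) :
  is_Cp p av -> forall x y, av (x + y) <= Num.max (av x) (av y).
Proof. by case=> _ [] _ [] _ []. Qed.

Lemma av_p (R : realType) p (K : closedFieldType) (av : K -> R) :
  is_Cp p av -> av (p%:R) = (p%:R)^-1.
Proof. by case=> _ [] _ [] _ [] _ []. Qed.

Lemma av0 (R : realType) p (K : closedFieldType) (av : K -> R) :
  is_Cp p av -> av 0 = 0.
Proof. by move=> Hc; apply/(av_eq0 Hc). Qed.

Lemma av1 (R : realType) p (K : closedFieldType) (av : K -> R) :
  is_Cp p av -> av 1 = 1.
Proof.
move=> Hc; have h := avM Hc 1 1; rewrite mulr1 in h.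
have : av 1 != 0 by apply/eqP => /(av_eq0 Hc) /eqP; rewrite oner_eq0.
move=> nz; apply: (mulfI nz); by rewrite mulr1 -h.
Qed.

Lemma avN (R : realType) p (K : closedFieldType) (av : K -> R) :
  is_Cp p av -> forall x, av (- x) = av x.
Proof.
move=> Hc x; have h1 : av (-1) = 1.
  have h := avM Hc (-1) (-1); rewrite mulrNN mulr1 (av1 Hc) in h.
  have g := av_ge0 Hc (-1); set a := av (-1) in h g *; nra.
by rewrite -mulN1r (avM Hc) h1 mul1r.
Qed.

Lemma avX (R : realType) p (K : closedFieldType) (av : K -> R) :
  is_Cp p av -> forall x n, av (x ^+ n) = av x ^+ n.
Proof.
move=> Hc x; elim=> [|n IH]; first by rewrite !expr0 (av1 Hc).
by rewrite !exprS (avM Hc) IH.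
Qed.

Lemma avV (R : realType) p (K : closedFieldType) (av : K -> R) :
  is_Cp p av -> forall x, av (x^-1) = (av x)^-1.
Proof.
move=> Hc x; have [->|nz] := eqVneq x 0; first by rewrite invr0 (av0 Hc) invr0.
have h := avM Hc x x^-1; rewrite mulfV // (av1 Hc) in h.
have nz' : av x != 0 by apply/eqP => /(av_eq0 Hc) /eqP; rewrite (negbTE nz).
by rewrite -[av x^-1](mulKf nz') -h mulr1.
Qed.

Lemma av_add_le (R : realType) p (K : closedFieldType) (av : K -> R) :
  is_Cp p av -> forall x y c, av x <= c -> av y <= c -> av (x + y) <= c.
Proof.
move=> Hc x y c hx hy; apply: (le_trans (av_ultra Hc x y)).
by rewrite ge_max hx hy.
Qed.

Lemma av_add_lt (R : realType) p (K : closedFieldType) (av : K -> R) :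
  is_Cp p av -> forall x y c, av x < c -> av y < c -> av (x + y) < c.
Proof.
move=> Hc x y c hx hy; apply: (le_lt_trans (av_ultra Hc x y)).
by rewrite gt_max hx hy.
Qed.

Lemma av_sub_le (R : realType) p (K : closedFieldType) (av : K -> R) :
  is_Cp p av -> forall x y c, av x <= c -> av y <= c -> av (x - y) <= c.
Proof. by move=> Hc x y c hx hy; apply: (av_add_le Hc) => //; rewrite (avN Hc). Qed.

Lemma av_sub_lt (R : realType) p (K : closedFieldType) (av : K -> R) :
  is_Cp p av -> forall x y c, av x < c -> av y < c -> av (x - y) < c.
Proof. by move=> Hc x y c hx hy; apply: (av_add_lt Hc) => //; rewrite (avN Hc). Qed.

Lemma av_dom (R : realType) p (K : closedFieldType) (av : K -> R) :
  is_Cp p av -> forall x y, av y < av x -> av (x + y) = av x.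
Proof.
move=> Hc x y h; apply/eqP; rewrite eq_le; apply/andP; split.
  by apply: (av_add_le Hc) => //; apply: ltW.
have e : x = (x + y) - y by rewrite addrK.
have := av_ultra Hc (x + y) (- y); rewrite -e (avN Hc).
rewrite le_max => /orP [//|]; by rewrite leNgt h.
Qed.

Lemma av_natr (R : realType) p (K : closedFieldType) (av : K -> R) :
  is_Cp p av -> forall n : nat, av (n%:R) <= 1.
Proof.
move=> Hc; elim=> [|n IH]; first by rewrite (av0 Hc).
by rewrite -addn1 natrD (av_add_le Hc) // (av1 Hc).
Qed.

Lemma av_sum_le (R : realType) p (K : closedFieldType) (av : K -> R) :
  is_Cp p av -> forall (I : Type) (r : seq I) (P : pred I) (F : I -> K) (c : R),
  0 <= c -> (forall i, P i -> av (F i) <= c) -> av (\sum_(i <- r | P i) F i) <= c.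
Proof.
move=> Hc I r P F c c0 h; apply: (big_ind (fun x => av x <= c)) => //.
  by rewrite (av0 Hc).
by move=> x y; apply: (av_add_le Hc).
Qed.

Lemma av_lam (R : realType) p (K : closedFieldType) (av : K -> R) :
  is_Cp p av -> forall l, av (l - 1) < 1 -> av l = 1.
Proof.
move=> Hc l h; have -> : l = 1 + (l - 1) by rewrite addrC subrK.
by rewrite (av_dom Hc) (av1 Hc).
Qed.


Lemma av_powdiff (R : realType) p (K : closedFieldType) (av : K -> R) :
  is_Cp p av -> forall x y (r : R) n, 0 <= r -> av x <= r -> av y <= r ->
  av (x ^+ n.+1 - y ^+ n.+1) <= av (x - y) * r ^+ n.
Proof.
move=> Hc x y r n r0 hx hy; elim: n => [|n IH]; first by rewrite !expr1 expr0 mulr1.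
have -> : x ^+ n.+2 - y ^+ n.+2 = x * (x ^+ n.+1 - y ^+ n.+1) + (x - y) * y ^+ n.+1.
  by rewrite !exprS; ring.
have hd := av_ge0 Hc (x - y).
apply: (av_add_le Hc); rewrite (avM Hc).
  rewrite [r ^+ _]exprS mulrCA; apply: ler_pM => //; exact: (av_ge0 Hc).
rewrite (avX Hc); apply: ler_wpM2l => //; apply: lerXn2r => //.
  exact: (av_ge0 Hc).
Qed.

Lemma av_binom (R : realType) p (K : closedFieldType) (av : K -> R) :
  prime p -> is_Cp p av -> forall (w e : K) (r : R),
  av w = r -> (p%:R)^-1 <= r -> av e <= r -> av e ^+ p.-1 <= r ^+ p ->
  av ((w + e) ^+ p - w ^+ p) <= av e * r ^+ p.
Proof.
move=> pp Hc w e r hw hpr her hep.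
have p1 : (1 < p)%N := prime_gt1 pp.
have r0 : 0 <= r by rewrite -hw (av_ge0 Hc).
have t0 := av_ge0 Hc e.
rewrite exprDn big_ord_recl /= subn0 expr0 mulr1 bin0 mulr1n addrC addKr.
apply: (av_sum_le Hc) => [|i _]; first by rewrite mulr_ge0 // exprn_ge0.
rewrite /bump /= add1n -mulr_natr !(avM Hc) !(avX Hc) hw.
have hi := ltn_ord i; move: (nat_of_ord i) hi => j hj.
have [ip|ip] := eqVneq j.+1 p.
  rewrite ip binn subnn expr0 mul1r (av1 Hc) mulr1.
  by rewrite -(prednK (ltnW p1)) exprS prednK ?ler_wpM2l //; lia.
have [q hq] : exists q, 'C(p, j.+1) = (q * p)%N.
  by apply/dvdnP/prime_dvd_bin => //; apply/andP; split=> //; rewrite ltn_neqAle ip.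
rewrite hq natrM (avM Hc) (av_p Hc).
have hq1 := av_natr Hc q.
have hq0 := av_ge0 Hc (q%:R).
have -> : (p - j.+1 = p.-1 - j)%N by lia.
have hrj : r ^+ (p.-1 - j) * r ^+ j = r ^+ p.-1 by rewrite -exprD; congr (_ ^+ _); lia.
have hej : av e ^+ j <= r ^+ j by apply: lerXn2r.
have hrp : r ^+ p = r * r ^+ p.-1 by rewrite -exprS prednK //; lia.
have hpi : 0 <= (p%:R : R)^-1 by rewrite invr_ge0 ler0n.
set A := r ^+ (p.-1 - j) in hrj *; set B := r ^+ j in hrj hej *.
set C := r ^+ p.-1 in hrj hrp *.
have A0 : 0 <= A by rewrite exprn_ge0.
rewrite exprS hrp; set E := av e ^+ j in hej *.
have E0 : 0 <= E by rewrite exprn_ge0.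
set a := av e in t0 hej *; set Q := av q%:R in hq1 hq0 *; set P := (p%:R : R)^-1 in hpr hpi *.
have s1 : A * (a * E) * (Q * P) <= A * (a * B) * (1 * P).
  apply: ler_pM; rewrite ?mulr_ge0 //.
    apply: ler_wpM2l => //; exact: ler_wpM2l.
  exact: ler_wpM2r.
apply: (le_trans s1); rewrite mul1r.
have -> : A * (a * B) * P = (a * C) * P by rewrite -hrj; ring.
have -> : a * (r * C) = (a * C) * r by ring.
apply: ler_wpM2l => //; by rewrite mulr_ge0 // -hrj mulr_ge0 // exprn_ge0.
Qed.


Lemma av_complete (R : realType) p (K : closedFieldType) (av : K -> R) :
  is_Cp p av -> forall u, abs_cauchy av u -> exists l, abs_cvg_to av u l.
Proof. by case=> _ [] _ [] _ [] _ [] _ []. Qed.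

Lemma av_sum_lt (R : realType) p (K : closedFieldType) (av : K -> R) :
  is_Cp p av -> forall (I : Type) (r : seq I) (P : pred I) (F : I -> K) (c : R),
  0 < c -> (forall i, P i -> av (F i) < c) -> av (\sum_(i <- r | P i) F i) < c.
Proof.
move=> Hc I r P F c c0 h; apply: (big_ind (fun x => av x < c)) => //.
  by rewrite (av0 Hc).
by move=> x y; apply: (av_add_lt Hc).
Qed.

Lemma ps_split (K : closedFieldType) (a : nat -> K) z n m : (n <= m)%N ->
  partial_sum a z m - partial_sum a z n = \sum_(n <= i < m) a i * z ^+ i.
Proof.
move=> nm; rewrite /partial_sum -!(big_mkord xpredT (fun i => a i * z ^+ i)).
by rewrite (big_cat_nat (leq0n n) nm) /= addrC addrK.
Qed.

Lemma ps_cauchy (R : realType) p (K : closedFieldType) (av : K -> R) rhat a z :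
  is_Cp p av -> 1 <= rhat -> conv_on_B av rhat a -> av z <= 1 ->
  abs_cauchy av (partial_sum a z).
Proof.
move=> Hc r1 hconv hz eps e0; have [N hN] := hconv eps e0; exists N.
have key : forall n m, (N <= n)%N -> (n <= m)%N ->
    av (partial_sum a z m - partial_sum a z n) < eps.
  move=> n m hn nm; rewrite ps_split // big_nat_cond; apply: (av_sum_lt Hc) => // i /andP [/andP [hi _] _].
  rewrite (avM Hc) (avX Hc); apply: le_lt_trans (hN i (leq_trans hn hi)).
  apply: ler_wpM2l; first exact: av_ge0 Hc _.
  apply: (le_trans (exprn_ile1 _ (av_ge0 Hc z) hz)); exact: exprn_ege1.
move=> m n hm hn; case: (leqP n m) => h; first exact: key.
by rewrite -opprB (avN Hc); apply: key => //; apply: ltnW.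
Qed.

Lemma pser_cvg (R : realType) p (K : closedFieldType) (av : K -> R) rhat a z :
  is_Cp p av -> 1 <= rhat -> conv_on_B av rhat a -> av z <= 1 ->
  abs_cvg_to av (partial_sum a z) (pser_eval av a z).
Proof.
move=> Hc r1 hconv hz; rewrite /pser_eval.
have [l hl] := av_complete Hc (ps_cauchy Hc r1 hconv hz).
by apply: (@xgetPex _ 0 [set s | abs_cvg_to av (partial_sum a z) s]); exists l.
Qed.

Lemma ps_bound (R : realType) p (K : closedFieldType) (av : K -> R) rhat a z c n :
  is_Cp p av -> 1 <= rhat -> 0 <= c -> (forall i, av (a i) * rhat ^+ i <= c) ->
  av z <= 1 -> av (partial_sum a z n) <= c.
Proof.
move=> Hc r1 c0 ha hz; rewrite /partial_sum; apply: (av_sum_le Hc) => // i _.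
rewrite (avM Hc) (avX Hc); apply: le_trans (ha i).
apply: ler_wpM2l; first exact: av_ge0 Hc _.
apply: (le_trans (exprn_ile1 _ (av_ge0 Hc z) hz)); exact: exprn_ege1.
Qed.

Lemma ps_lip (R : realType) p (K : closedFieldType) (av : K -> R) rhat a z0 z1 c n :
  is_Cp p av -> 1 <= rhat -> 0 <= c -> (forall i, av (a i) * rhat ^+ i <= c) ->
  av z0 <= 1 -> av z1 <= 1 ->
  av (partial_sum a z0 n - partial_sum a z1 n) <= c * av (z0 - z1).
Proof.
move=> Hc r1 c0 ha h0 h1; rewrite /partial_sum -sumrB.
apply: (av_sum_le Hc) => [|i _]; first by rewrite mulr_ge0 // (av_ge0 Hc).
rewrite -mulrBr (avM Hc); case: (nat_of_ord i) => [|k].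
  by rewrite !expr0 subrr (av0 Hc) mulr0 mulr_ge0 // (av_ge0 Hc).
apply: ler_pM; rewrite ?(av_ge0 Hc) //.
  apply: le_trans (ha k.+1); rewrite -[X in X <= _]mulr1; apply: ler_wpM2l.
    exact: av_ge0 Hc _.
  exact: exprn_ege1.
by have := av_powdiff Hc k ler01 h0 h1; rewrite expr1n mulr1.
Qed.

Lemma pser_bound (R : realType) p (K : closedFieldType) (av : K -> R) rhat a z c :
  is_Cp p av -> 1 <= rhat -> conv_on_B av rhat a -> 0 <= c ->
  (forall i, av (a i) * rhat ^+ i <= c) ->
  av z <= 1 -> av (pser_eval av a z) <= c.
Proof.
move=> Hc r1 hconv c0 ha hz; set s := pser_eval av a z.
case: (leP (av s) c) => // hlt; exfalso.
have e0 : 0 < av s by apply: le_lt_trans hlt.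
have [N hN] := pser_cvg Hc r1 hconv hz e0.
have hb := fun n => ps_bound n Hc r1 c0 ha hz.
have : av (partial_sum a z N - (partial_sum a z N - s)) < av s.
  apply: (av_sub_lt Hc); first exact: le_lt_trans (hb N) hlt.
  by apply: hN.
by rewrite opprB addrC subrK ltxx.
Qed.

Lemma pser_lip (R : realType) p (K : closedFieldType) (av : K -> R) rhat a z0 z1 c :
  is_Cp p av -> 1 <= rhat -> conv_on_B av rhat a -> 0 <= c ->
  (forall i, av (a i) * rhat ^+ i <= c) ->
  av z0 <= 1 -> av z1 <= 1 ->
  av (pser_eval av a z0 - pser_eval av a z1) <= c * av (z0 - z1).
Proof.
move=> Hc r1 hconv c0 ha h0 h1.
set s0 := pser_eval av a z0; set s1 := pser_eval av a z1.
case: (leP (av (s0 - s1)) (c * av (z0 - z1))) => // hlt; exfalso.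
have e0 : 0 < av (s0 - s1).
  by apply: le_lt_trans hlt; rewrite mulr_ge0 // (av_ge0 Hc).
have [N0 hN0] := pser_cvg Hc r1 hconv h0 e0.
have [N1 hN1] := pser_cvg Hc r1 hconv h1 e0.
set N := maxn N0 N1.
have := ps_lip N Hc r1 c0 ha h0 h1 => hl.
have e : s0 - s1 = (partial_sum a z0 N - partial_sum a z1 N)
   - (partial_sum a z0 N - s0) + (partial_sum a z1 N - s1) by ring.
have : av (s0 - s1) < av (s0 - s1).
  rewrite [X in av X < _]e; apply: (av_add_lt Hc); last by apply: hN1; lia.
  apply: (av_sub_lt Hc); first exact: le_lt_trans hl hlt.
  by apply: hN0; lia.
by rewrite ltxx.
Qed.


Lemma av_pinv (R : realType) p (K : closedFieldType) (av : K -> R) :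
  is_Cp p av -> av ((p%:R : K)^-1) = p%:R.
Proof. by move=> Hc; rewrite (avV Hc) (av_p Hc) invrK. Qed.

Lemma h_diff (R : realType) p (K : closedFieldType) (av : K -> R) (F : K -> K)
  (c : R) (l0 l1 h0 h1 : K) :
  prime p -> is_Cp p av -> 0 <= c -> c < 1 ->
  (forall z0 z1, av z0 <= 1 -> av z1 <= 1 -> av (F z0 - F z1) <= c * av (z0 - z1)) ->
  av (l0 - 1) < 1 -> av (l1 - 1) < 1 ->
  av (h0 - 1) < 1 -> av (h1 - 1) < 1 ->
  Plam p l0 h0 + F h0 = h0 -> Plam p l1 h1 + F h1 = h1 ->
  av (h0 - h1) <= av (l0 - l1) * av (h0 - 1).
Proof.
move=> pp Hc c0 c1 hF hl0 hl1 hh0 hh1 e0 e1.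
have p1 : (1 < p)%N := prime_gt1 pp.
have hp : (1 : R) < p%:R by rewrite ltr1n.
set H0 := h0 - 1 in hh0 *; set H1 := h1 - 1 in hh1 *.
have ez0 : h0 = 1 + H0 by rewrite /H0 addrC subrK.
have ez1 : h1 = 1 + H1 by rewrite /H1 addrC subrK.
have a0 : av h0 = 1 by rewrite ez0 (av_dom Hc) (av1 Hc).
have a1 : av h1 = 1 by rewrite ez1 (av_dom Hc) (av1 Hc).
have ha0 : av h0 <= 1 by rewrite a0.
have ha1 : av h1 <= 1 by rewrite a1.
have eta : h0 - h1 = H0 - H1 by rewrite /H0 /H1; ring.
set pi := (p%:R : K)^-1.
have key : l1 * pi * h0 ^+ p * (h0 - h1) =
   (h0 ^+ p.+1 - h1 ^+ p.+1) - (h0 - h1) - (l0 - l1) * pi * h0 ^+ p * H0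
   - l1 * pi * H1 * (h0 ^+ p - h1 ^+ p) + (F h0 - F h1).
  move: e0 e1; rewrite /Plam /H0 /H1 /pi => e0 e1.
  have E0 : F h0 = h0 - (l0 / p%:R * h0 ^+ p + (1 - l0 / p%:R) * h0 ^+ p.+1).
    by apply: (addrI (l0 / p%:R * h0 ^+ p + (1 - l0 / p%:R) * h0 ^+ p.+1)); rewrite e0; ring.
  have E1 : F h1 = h1 - (l1 / p%:R * h1 ^+ p + (1 - l1 / p%:R) * h1 ^+ p.+1).
    by apply: (addrI (l1 / p%:R * h1 ^+ p + (1 - l1 / p%:R) * h1 ^+ p.+1)); rewrite e1; ring.
  rewrite E0 E1 !exprS; ring.
set d := av (h0 - h1).
have d0 : 0 <= d := av_ge0 Hc _.
have hL : av (l1 * pi * h0 ^+ p * (h0 - h1)) = p%:R * d.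
  by rewrite !(avM Hc) (av_lam Hc hl1) (av_pinv Hc) (avX Hc) a0 expr1n !mul1r mulr1.
have [dz|dpos] := eqVneq d 0.
  by rewrite dz mulr_ge0 // (av_ge0 Hc).
have dpos' : 0 < d by rewrite lt_neqAle eq_sym dpos d0.
set D := av (l0 - l1) * av H0.
case: (leP d D) => // hDd; exfalso.
have pp0 := prime_gt0 pp.
have pd : D * p%:R < d * p%:R by rewrite ltr_pM2r // ltr0n.
have : p%:R * d < p%:R * d.
  rewrite -[X in X < _]hL key.
  have hdp : d < p%:R * d by rewrite -[X in X < _]mul1r ltr_pM2r.
  apply: (av_add_lt Hc); last first.
    apply: le_lt_trans (hF _ _ _ _) _; rewrite ?a0 ?a1 //.
    rewrite -/d; apply: le_lt_trans hdp; rewrite -[X in _ <= X]mul1r.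
    by apply: ler_wpM2r => //; apply: ltW.
  apply: (av_sub_lt Hc); last first.
    rewrite !(avM Hc) (av_lam Hc hl1) (av_pinv Hc) mul1r.
    have := av_powdiff Hc p.-1 ler01 ha0 ha1.
    rewrite prednK ?expr1n ?mulr1 //.
    rewrite -/d => hpd.
    rewrite -mulrA ltr_pM2l ?ltr0n //.
    apply: le_lt_trans (ler_wpM2l (av_ge0 Hc H1) hpd) _.
    by rewrite -[X in _ < X]mul1r ltr_pM2r.
  apply: (av_sub_lt Hc); last first.
    rewrite !(avM Hc) (av_pinv Hc) (avX Hc) a0 expr1n mulr1.
    by rewrite mulrAC -/D [p%:R * d]mulrC.
  apply: (av_sub_lt Hc) => //.
  apply: le_lt_trans (av_powdiff Hc p ler01 ha0 ha1) _.
  by rewrite expr1n mulr1.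
by rewrite ltxx.
Qed.


Lemma lvl_facts (R : realType) p k (c : R) : (1 < p)%N -> 0 <= c -> c < rho R p ->
  let r := rho_seq R p k.+1 in let r' := rho_seq R p k in
  [/\ r' = p%:R * r ^+ p, 0 < r, r < 1, (p%:R)^-1 <= r & c / p%:R < r ] /\
  [/\ c < r', c / p%:R < r', r' <= 1, r ^+ p.+1 < r' & Sconst R p <= r ] /\
  [/\ Sconst R p ^+ p.-1 <= r ^+ p, c / p%:R < 1, 0 < r' & c < 1].
Proof.
move=> p1 c0 cr r r'.
have hp := @p_pos R p p1.
have hr : r ^+ p = r' / p%:R by exact: rhos_pow.
have rp : r' = p%:R * r ^+ p by rewrite hr mulrC divfK // gt_eqF.
have r0 : 0 < r by exact: rhos_gt0.
have r'0 : 0 < r' by exact: rhos_gt0.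
have r1 : r < 1 by exact: rhos_lt1.
have rr : rho R p < r by exact: rho_lt_rhos.
have rr' : rho R p < r' by exact: rho_lt_rhos.
have pr := invp_le_rho R p p1.
have rl1 := rho_lt1 R p p1.
have cp : c / p%:R <= c.
  by rewrite ler_pdivrMr // -[X in X <= _]mulr1 ler_wpM2l // ler1n ltnW.
have Sr : Sconst R p <= r by apply: le_trans (S_le_rho R p p1) (ltW rr).
have Sp : Sconst R p ^+ p.-1 <= r ^+ p.
  by rewrite S_pow // hr ler_pM2r ?invr_gt0 // ltW.
have rpl : r ^+ p.+1 < r'.
  rewrite rp exprS ltr_pM2r ?exprn_gt0 //.
  by apply: lt_le_trans r1 _; rewrite ler1n ltnW.
split; first (split => //; [exact: le_trans pr (ltW rr)| exact: le_lt_trans cp (lt_trans cr rr)]).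
split; first (split => //; [exact: lt_trans cr rr' | exact: le_lt_trans cp (lt_trans cr rr') | exact: rhos_le1]).
split => //; [exact: le_lt_trans cp (lt_trans cr rl1) | exact: lt_trans cr rl1].
Qed.

Lemma Q_abs (R : realType) p (K : closedFieldType) (av : K -> R) (F : K -> K) (c : R) k
  (lam h y : K) :
  prime p -> is_Cp p av -> 0 <= c -> c < rho R p ->
  (forall z, av z <= 1 -> av (F z) <= c) ->
  av (lam - 1) < 1 -> av (h - 1) <= c / p%:R -> av y = rho_seq R p k.+1 ->
  av (Plam p lam (y + h - 1) + F (y + h - 1) + 1 - h) = rho_seq R p k.
Proof.
move=> pp Hc c0 cr hFb hl hh hy.
have p1 : (1 < p)%N := prime_gt1 pp.
have L := lvl_facts k p1 c0 cr; cbv zeta in L.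
case: L => [[rp r0 r1 pr cpr] [[cr' cpr' r'1 rpl Sr] [Sp cp1 r'0 c1]]].
set r := rho_seq R p k.+1 in rp r0 r1 pr cpr rpl Sr Sp hy *.
set r' := rho_seq R p k in rp cr' cpr' r'1 rpl r'0 *.
set w := y + h - 1.
have aw : av w = r.
  by rewrite /w -addrA (av_dom Hc) // hy; apply: le_lt_trans hh cpr.
have a1w : av (1 - w) = 1.
  by rewrite (av_dom Hc) (av1 Hc) // (avN Hc) aw.
set pi := (p%:R : K)^-1.
have -> : Plam p lam w + F w + 1 - h = lam * pi * w ^+ p * (1 - w) +
    (w ^+ p.+1 + F w - (h - 1)).
  rewrite /Plam /pi /w !exprS; ring.
rewrite (av_dom Hc) !(avM Hc) (av_lam Hc hl) (av_pinv Hc) (avX Hc) aw a1w ?mul1r ?mulr1 -?rp //.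
apply: (av_sub_lt Hc); last by apply: le_lt_trans hh cpr'.
apply: (av_add_lt Hc); first by rewrite (avX Hc) aw.
apply: le_lt_trans cr'; apply: hFb; rewrite aw; exact: ltW.
Qed.

Lemma Q_step (R : realType) p (K : closedFieldType) (av : K -> R) (F : K -> K) (c : R) k
  (lam0 lam1 h0 h1 y0 y1 : K) :
  prime p -> is_Cp p av -> 0 <= c -> c < rho R p ->
  (forall z0 z1, av z0 <= 1 -> av z1 <= 1 -> av (F z0 - F z1) <= c * av (z0 - z1)) ->
  av (lam0 - 1) < 1 -> av (lam1 - 1) < 1 ->
  av (h0 - 1) <= c / p%:R -> av (h1 - 1) <= c / p%:R ->
  av (h0 - h1) <= av (lam0 - lam1) * (c / p%:R) ->
  av (lam0 - lam1) <= Sconst R p ->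
  av y0 = rho_seq R p k.+1 -> av y1 = rho_seq R p k.+1 -> av (y0 - y1) <= Sconst R p ->
  exists T, av T = av (lam0 - lam1) * rho_seq R p k /\
   av ((Plam p lam0 (y0 + h0 - 1) + F (y0 + h0 - 1) + 1 - h0)
     - (Plam p lam1 (y1 + h1 - 1) + F (y1 + h1 - 1) + 1 - h1) - T)
   <= Num.max (rho_seq R p k * av (y0 - y1)) (av (lam0 - lam1) * (c / p%:R)).
Proof.
move=> pp Hc c0 cr hFl hl0 hl1 hh0 hh1 hhd hdS hy0 hy1 heS.
have p1 : (1 < p)%N := prime_gt1 pp.
have L := lvl_facts k p1 c0 cr; cbv zeta in L.
case: L => [[rp r0 r1 pr cpr] [[cr' cpr' r'1 rpl Sr] [Sp cp1 r'0 c1]]].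
set r := rho_seq R p k.+1 in rp r0 r1 pr cpr rpl Sr Sp hy0 hy1 *.
set r' := rho_seq R p k in rp cr' cpr' r'1 rpl r'0 *.
set del := av (lam0 - lam1) in hhd hdS *.
set B := Num.max (r' * av (y0 - y1)) (del * (c / p%:R)).
have del0 : 0 <= del := av_ge0 Hc _.
set w0 := y0 + h0 - 1; set w1 := y1 + h1 - 1.
have aw0 : av w0 = r.
  by rewrite /w0 -addrA (av_dom Hc) // hy0; apply: le_lt_trans hh0 cpr.
have aw1 : av w1 = r.
  by rewrite /w1 -addrA (av_dom Hc) // hy1; apply: le_lt_trans hh1 cpr.
have a1w : av (1 - w1) = 1.
  by rewrite (av_dom Hc) (av1 Hc) // (avN Hc) aw1.
set pi := (p%:R : K)^-1.
exists ((lam0 - lam1) * pi * w1 ^+ p * (1 - w1)).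
split.
  by rewrite !(avM Hc) (av_pinv Hc) (avX Hc) aw1 a1w mulr1 rp mulrA.
set eps := w0 - w1.
have ew0 : w0 = w1 + eps by rewrite /eps addrC subrK.
have -> : Plam p lam0 w0 + F w0 + 1 - h0 - (Plam p lam1 w1 + F w1 + 1 - h1) -
    (lam0 - lam1) * pi * w1 ^+ p * (1 - w1) =
    lam0 * pi * (w0 ^+ p - w1 ^+ p) + (1 - lam0 * pi) * (w0 ^+ p.+1 - w1 ^+ p.+1)
    + (F w0 - F w1) - (h0 - h1).
  rewrite /Plam /pi !exprS; ring.
have eeps : eps = (y0 - y1) + (h0 - h1) by rewrite /eps /w0 /w1; ring.
have cpS : del * (c / p%:R) <= Sconst R p.
  apply: le_trans hdS; rewrite -[X in _ <= X]mulr1; apply: ler_wpM2l => //.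
  exact: ltW.
have aeS : av eps <= Sconst R p.
  rewrite eeps; apply: (av_add_le Hc) => //; exact: le_trans hhd cpS.
have aer : av eps <= r := le_trans aeS Sr.
have hB1 : del * (c / p%:R) <= B by rewrite le_max lexx orbT.
have hB2 : r' * av (y0 - y1) <= B by rewrite le_max lexx.
have hE : r' * av eps <= B.
  have := av_ultra Hc (y0 - y1) (h0 - h1); rewrite -eeps le_max => /orP [h|h].
    by apply: le_trans hB2; apply: ler_wpM2l => //; apply: ltW.
  apply: le_trans hB1; apply: le_trans hhd; apply: le_trans h.
  by rewrite -[X in _ <= X]mul1r; apply: ler_wpM2r => //; apply: (av_ge0 Hc).
have ae0 := av_ge0 Hc eps.
have rp0 : 0 <= r ^+ p by rewrite exprn_ge0 // ltW.
apply: (av_sub_le Hc); last exact: le_trans hhd hB1.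
apply: (av_add_le Hc); last first.
  apply: (le_trans _ hE); apply: (le_trans (hFl _ _ _ _)).
  - by rewrite aw0; apply: ltW.
  - by rewrite aw1; apply: ltW.
  by rewrite -/eps; apply: ler_wpM2r => //; apply: ltW.
have hpe : p%:R * (av eps * r ^+ p) <= B by rewrite mulrCA -rp mulrC.
apply: (av_add_le Hc); rewrite (avM Hc).
  rewrite (avM Hc) (av_lam Hc hl0) (av_pinv Hc) mul1r.
  apply: le_trans hpe; apply: ler_wpM2l; first by rewrite ler0n.
  rewrite ew0; apply: (av_binom pp Hc aw1 pr aer).
  apply: (le_trans _ Sp); apply: lerXn2r => //.
  by rewrite nnegrE; apply/ltW/S_gt0.
apply: (le_trans _ hpe); apply: ler_pM; rewrite ?(av_ge0 Hc) //.
  apply: (av_sub_le Hc); first by rewrite (av1 Hc) ler1n ltnW.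
  by rewrite (avM Hc) (av_lam Hc hl0) (av_pinv Hc) mul1r.
have aw0' : av w0 <= r by rewrite aw0.
have aw1' : av w1 <= r by rewrite aw1.
exact: (av_powdiff Hc p (ltW r0) aw0' aw1').
Qed.


Lemma ar1 (j k m : nat) : (j.+1 + k.+1 = m)%N -> (j + k.+2 = m)%N.
Proof. lia. Qed.

Lemma ar2 (k m : nat) : (0 + k.+1 = m)%N -> (k.+1 = m)%N.
Proof. lia. Qed.

Lemma ar3 (j k m : nat) : (j.+1 + k.+1 = m)%N -> (k.+1 < m)%N.
Proof. lia. Qed.

Lemma ar4 (m : nat) : (1 <= m)%N -> (m.-1 + 1 = m)%N.
Proof. lia. Qed.

Lemma prod_rhos (R : realType) p a b : (1 < p)%N ->
  0 <= \prod_(a <= i < b) rho_seq R p i <= 1.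
Proof.
move=> p1; apply: (big_ind (fun x : R => 0 <= x <= 1)) => //.
  by rewrite ler01 lexx.
  move=> x y /andP [x0 x1] /andP [y0 y1]; rewrite mulr_ge0 //=.
  by rewrite -[X in _ <= X]mulr1 ler_pM.
by move=> i _; rewrite rhos_le1 // ltW // rhos_gt0.
Qed.

Unset Implicit Arguments.

Theorem lemma3p13 (R : realType) (p : nat) (K : closedFieldType) (av : K -> R)
  (rhat : R) (a : nat -> K) (h : K -> K)
  (m : nat) (x0 x1 lam0 lam1 : K) :
  prime p ->
  is_Cp p av ->
  (exists w : K, w != 0 /\ av w = rhat) -> 1 < rhat ->
  conv_on_B av rhat a -> normB_lt av rhat a (rho R p) ->
  (forall lam : K, av (lam - 1) < 1 ->
     av (h lam - 1) <= av (pser_eval av a 1) / p%:R /\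
     Plam p lam (h lam) + pser_eval av a (h lam) = h lam) ->
  (1 <= m)%N ->
  av x0 = rho_seq R p m -> av x1 = rho_seq R p m ->
  av (x0 - x1) <= Sconst R p ->
  av (lam0 - 1) < 1 -> av (lam1 - 1) < 1 ->
  (\prod_(1 <= i < m) rho_seq R p i) * av (x0 - x1) < av (lam0 - lam1) ->
  av (lam0 - lam1) <= Sconst R p ->
  av (iter m (Qlam av p a h lam0) x0 - iter m (Qlam av p a h lam1) x1)
    = av (lam0 - lam1).
Proof.
move=> pp Hc _ hr1 hconv [c [cr ha]] hh m1 ax0 ax1 d0S hl0 hl1 hprod hdS.
have p1 : (1 < p)%N := prime_gt1 pp.
have r1 : 1 <= rhat := ltW hr1.
have c0 : 0 <= c.
  by apply: le_trans (ha 0%N); rewrite expr0 mulr1 (av_ge0 Hc).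
have hp := @p_pos R p p1.
have crho1 : c < 1 := lt_trans cr (rho_lt1 R p p1).
have cp1 : c / p%:R < 1.
  apply: le_lt_trans crho1; rewrite ler_pdivrMr // -[X in X <= _]mulr1.
  by rewrite ler_wpM2l // ler1n ltnW.
set F := pser_eval av a.
have hFb : forall z, av z <= 1 -> av (F z) <= c.
  by move=> z hz; apply: (pser_bound Hc r1 hconv c0 ha hz).
have hFl : forall z0 z1, av z0 <= 1 -> av z1 <= 1 ->
    av (F z0 - F z1) <= c * av (z0 - z1).
  by move=> z0 z1 h0 h1; apply: (pser_lip Hc r1 hconv c0 ha h0 h1).
have hH : forall lam, av (lam - 1) < 1 -> av (h lam - 1) <= c / p%:R.
  move=> lam hl; have [hb _] := hh lam hl; apply: le_trans hb _.
  by rewrite ler_pM2r ?invr_gt0 //; apply: hFb; rewrite (av1 Hc).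
set del := av (lam0 - lam1) in hprod hdS *.
have del0 : 0 <= del := av_ge0 Hc _.
have hhd : av (h lam0 - h lam1) <= del * (c / p%:R).
  have [_ e0] := hh lam0 hl0; have [_ e1] := hh lam1 hl1.
  apply: le_trans (h_diff pp Hc c0 crho1 hFl hl0 hl1 _ _ e0 e1) _.
  - exact: le_lt_trans (hH _ hl0) cp1.
  - exact: le_lt_trans (hH _ hl1) cp1.
  by apply: ler_wpM2l => //; apply: hH.
set Q0 := Qlam av p a h lam0; set Q1 := Qlam av p a h lam1.
set d0 := av (x0 - x1) in d0S hprod *.
have d00 : 0 <= d0 := av_ge0 Hc _.
have inv : forall j k, (j + k.+1 = m)%N ->
  [/\ av (iter j Q0 x0) = rho_seq R p k.+1, av (iter j Q1 x1) = rho_seq R p k.+1 &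
      av (iter j Q0 x0 - iter j Q1 x1) <=
        Num.max ((\prod_(k.+1 <= i < m) rho_seq R p i) * d0) (del * rho_seq R p k.+1)].
  elim=> [|j IH] k hjk.
    move: (ar2 hjk) => hk; rewrite -hk in ax0 ax1 *; rewrite big_geq // mul1r.
    split => //; rewrite le_max; apply/orP; left; exact: lexx.
  have [u0 u1 ud] := IH k.+1 (ar1 hjk).
  have hkm := ar3 hjk.
  have /andP [P0 P1] := prod_rhos R k.+2 m p1.
  have rk0 := rhos_gt0 R p k.+2 p1; have rk1 := rhos_le1 R p k.+2 p1.
  have rk0' := rhos_gt0 R p k.+1 p1.
  have L := lvl_facts k.+1 p1 c0 cr; cbv zeta in L.
  case: L => [[rp r0 r1' pr cpr] [[cr' cpr' r'1 rpl Sr] [Sp cp1' r'0 c1]]].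
  have ueS : av (iter j Q0 x0 - iter j Q1 x1) <= Sconst R p.
    apply: le_trans ud _; rewrite ge_max; apply/andP; split.
      apply: le_trans d0S; rewrite -[X in _ <= X]mul1r; exact: ler_wpM2r.
    apply: le_trans hdS; rewrite -[X in _ <= X]mulr1; exact: ler_wpM2l.
  have [T [aT hT]] := Q_step (k := k.+1) pp Hc c0 cr hFl hl0 hl1 (hH _ hl0) (hH _ hl1)
    hhd hdS u0 u1 ueS.
  rewrite !iterS; split.
  - exact: (Q_abs pp Hc c0 cr hFb hl0 (hH _ hl0) u0).
  - exact: (Q_abs pp Hc c0 cr hFb hl1 (hH _ hl1) u1).
  rewrite (big_ltn hkm).
  set M := Num.max _ _.
  have hM2 : del * rho_seq R p k.+1 <= M by rewrite le_max lexx orbT.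
  have -> : Q0 (iter j Q0 x0) - Q1 (iter j Q1 x1) =
    T + (Q0 (iter j Q0 x0) - Q1 (iter j Q1 x1) - T) by rewrite [T + _]addrC subrK.
  apply: (av_add_le Hc); first by rewrite aT.
  apply: le_trans hT _; rewrite ge_max; apply/andP; split; last first.
    apply: le_trans hM2; apply: ler_wpM2l => //; exact: ltW.
  apply: le_trans (ler_wpM2l (ltW rk0') ud) _.
  rewrite maxr_pMr; last exact: ltW.
  rewrite ge_max; apply/andP; split.
    by rewrite le_max mulrA lexx.
  apply: le_trans hM2; rewrite mulrCA; apply: ler_wpM2l => //.
  by rewrite -[X in _ <= X]mulr1 ler_wpM2l // ltW.
have [u0 u1 ud] := inv m.-1 0%N (ar4 m1).
have E : forall f (x : K), iter m f x = f (iter m.-1 f x).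
  by move=> f x; rewrite -{1}(prednK m1).
have /andP [P0 P1] := prod_rhos R 1 m p1.
have dpos : 0 < del by apply: le_lt_trans hprod; rewrite mulr_ge0.
have r1lt : rho_seq R p 1 < 1 := rhos_lt1 R p 0 p1.
have ueS : av (iter m.-1 Q0 x0 - iter m.-1 Q1 x1) <= Sconst R p.
  apply: le_trans ud _; rewrite ge_max; apply/andP; split.
    apply: le_trans d0S; rewrite -[X in _ <= X]mul1r; exact: ler_wpM2r.
  apply: le_trans hdS; rewrite -[X in _ <= X]mulr1; apply: ler_wpM2l => //; exact: ltW.
have [T [aT hT]] := Q_step (k := 0%N) pp Hc c0 cr hFl hl0 hl1 (hH _ hl0) (hH _ hl1)
    hhd hdS u0 u1 ueS.
have r00 : rho_seq R p 0 = 1 by [].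
rewrite r00 mulr1 in aT; rewrite r00 mul1r in hT.
rewrite !E.
have -> : Q0 (iter m.-1 Q0 x0) - Q1 (iter m.-1 Q1 x1) =
    T + (Q0 (iter m.-1 Q0 x0) - Q1 (iter m.-1 Q1 x1) - T) by rewrite [T + _]addrC subrK.
rewrite (av_dom Hc) // aT; apply: le_lt_trans hT _; rewrite gt_max; apply/andP; split.
  apply: le_lt_trans ud _; rewrite gt_max hprod /=.
  by rewrite -[X in _ < X]mulr1 ltr_pM2l.
by rewrite -[X in _ < X]mulr1 ltr_pM2l.
Qed.
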